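(* Let $N\ge1$, $B\in\mathbb{R}$, and for $i=1,\dots,N$ let $D_i>0$, $b_i>0$, $a_i\in\mathbb{R}$. For $\lambda\in(0,\infty)$ define $$q_i(\lambda):=\frac{W\big(\exp(a_i+\frac{b_i}{\lambda}-1)\big)}{W\big(\exp(a_i+\frac{b_i}{\lambda}-1)\big)+1},$$ let $c_i(q):=-\dfrac{a_i}{b_i}-\dfrac{1}{b_i}\big[\ln(1-q)-\ln q\big]$ for $q\in(0,1)$, and define $$f(\lambda):=\sum_{i=1}^N D_i q_i(\lambda),\qquad g(\lambda):=\sum_{i=1}^N D_i q_i(\lambda)\,c_i(q_i(\lambda))-B.$$ Then $f$ and $g$ are strictly decreasing on $(0,\infty)$, and $\lim_{\lambda\to0^+}g(\lambda)>0$.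
   Context: $W$ denotes the Lambert $W$ function on $(0,\infty)$: the inverse of $x\mapsto xe^x$ on $(0,\infty)$. Note $q_i(\lambda)\in(0,1)$. Here $f$ is total sales and $g$ the exceeded budget as functions of the dual variable $\lambda$. *)

(* Defs.v *)
From Stdlib Require Import Reals Lra List ClassicalEpsilon.
From Coquelicot Require Import Coquelicot.
Open Scope R_scope.

(* Lambert W on (0,oo): the (unique) w > 0 with w * exp w = x.
   For x > 0 such a w exists and is unique; outside (0,oo) the value is
   unspecified (never used). *)
Definition LambertW (x : R) : R :=
  epsilon (inhabits 0) (fun w => 0 < w /\ w * exp w = x).

Definition sumN (N : nat) (F : nat -> R) : R :=
  fold_right Rplus 0 (map F (seq 0 N)).

Definition q_i (a b : R) (lam : R) : R :=
  let w := LambertW (exp (a + b / lam - 1)) in w / (w + 1).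

Definition c_i (a b : R) (q : R) : R :=
  - a / b - / b * (ln (1 - q) - ln q).

Definition f_sales (N : nat) (D a b : nat -> R) (lam : R) : R :=
  sumN N (fun i => D i * q_i (a i) (b i) lam).

Definition g_budget (N : nat) (D a b : nat -> R) (B : R) (lam : R) : R :=
  sumN N (fun i => D i * q_i (a i) (b i) lam *
                   c_i (a i) (b i) (q_i (a i) (b i) lam)) - B.

(* Main.v *)
Require Import Defs.
From Stdlib Require Import Reals.
From Coquelicot Require Import Coquelicot.
From Stdlib Require Import Lra Psatz List ClassicalEpsilon.
Open Scope R_scope.

Lemma W_exists (x : R) : 0 < x -> exists w, 0 < w /\ w * exp w = x.
Proof.
  intros Hx.
  set (f := fun w => w * exp w - x).
  assert (Hc : continuity f).
  { unfold f. apply (continuity_minus (fun w => w * exp w) (fun _ => x)).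
    - apply (continuity_mult id exp).
      + apply derivable_continuous, derivable_id.
      + apply derivable_continuous, derivable_exp.
    - apply continuity_const. intros a c; reflexivity. }
  assert (H1 : f 0 < 0) by (unfold f; rewrite exp_0; lra).
  assert (H2 : 0 < f x).
  { unfold f. assert (1 < exp x).
    { pose proof (exp_ineq1 x). assert (x <> 0) by lra. specialize (H H0). lra. }
    nra. }
  destruct (IVT f 0 x Hc Hx H1 H2) as [z [Hz Hfz]].
  exists z. unfold f in Hfz. split.
  - destruct (Req_dec z 0) as [E|E].
    + subst z. rewrite exp_0 in Hfz. lra.
    + lra.
  - lra.
Qed.

Definition Wt (t : R) := LambertW (exp t).

Lemma Wt_spec t : 0 < Wt t /\ ln (Wt t) + Wt t = t.
Proof.
  unfold Wt, LambertW.
  pose proof (epsilon_spec (inhabits 0) (fun w => 0 < w /\ w * exp w = exp t)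
    (W_exists (exp t) (exp_pos t))) as [H1 H2].
  split; [exact H1|].
  set (w := epsilon _ _) in *.
  rewrite <- (ln_exp t), <- H2, ln_mult, ln_exp; auto using exp_pos.
Qed.

Lemma phi_mono w1 w2 : 0 < w1 -> 0 < w2 -> ln w1 + w1 < ln w2 + w2 -> w1 < w2.
Proof.
  intros H1 H2 H.
  destruct (Rlt_or_le w1 w2) as [|Hle]; auto.
  destruct (Req_dec w1 w2) as [E|E].
  - subst; lra.
  - assert (ln w2 < ln w1) by (apply ln_increasing; lra). lra.
Qed.

Definition Hf (a b w : R) := w / (w + 1) * ((ln w - a) / b).

Lemma c_eq a b w : 0 < w -> c_i a b (w / (w + 1)) = (ln w - a) / b.
Proof.
  intros Hw. unfold c_i.
  replace (1 - w / (w + 1)) with (/ (w + 1)) by (field; lra).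
  rewrite ln_Rinv by lra. unfold Rdiv at 2. rewrite ln_mult by (try apply Rinv_0_lt_compat; lra).
  rewrite ln_Rinv by lra.
  unfold Rdiv. ring.
Qed.

Lemma Hf_mono a b w1 w2 : 0 < b -> 0 < w1 -> w1 < w2 -> 0 < ln w1 + w1 - a + 1 ->
  Hf a b w1 < Hf a b w2.
Proof.
  intros Hb H1 H12 Hpos. unfold Hf.
  set (L := ln w2 - ln w1).
  assert (HL : 0 < L) by (unfold L; pose proof (ln_increasing w1 w2 H1 H12); lra).
  assert (HE : exp (- L) = w1 / w2).
  { unfold L. replace (- (ln w2 - ln w1)) with (ln w1 + - ln w2) by ring.
    rewrite exp_plus, exp_ln by lra. rewrite <- ln_Rinv by lra.
    rewrite exp_ln. reflexivity. apply Rinv_0_lt_compat; lra. }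
  pose proof (exp_ineq1 (- L)) as Hx. rewrite HE in Hx.
  assert (Hx' : 1 - L < w1 / w2) by (apply Hx; lra).
  assert (HwL : w2 - w1 < w2 * L).
  { assert (w2 * (1 - L) < w2 * (w1 / w2)) by (apply Rmult_lt_compat_l; lra).
    replace (w2 * (w1 / w2)) with w1 in H by (field; lra). lra. }
  set (u1 := ln w1 - a).
  replace (ln w2 - a) with (u1 + L) by (unfold u1, L; ring).
  apply Rmult_lt_reg_r with (b * (w1 + 1) * (w2 + 1)).
  { apply Rmult_lt_0_compat; [apply Rmult_lt_0_compat|]; lra. }
  replace (w1 / (w1 + 1) * (u1 / b) * (b * (w1 + 1) * (w2 + 1)))
    with (w1 * u1 * (w2 + 1)) by (field; lra).
  replace (w2 / (w2 + 1) * ((u1 + L) / b) * (b * (w1 + 1) * (w2 + 1)))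
    with (w2 * (u1 + L) * (w1 + 1)) by (field; lra).
  assert (0 < (w1 + 1) * (w2 * L - (w2 - w1))) by (apply Rmult_lt_0_compat; lra).
  assert (0 < (w2 - w1) * (u1 + w1 + 1)) by (apply Rmult_lt_0_compat; unfold u1; lra).
  nra.
Qed.

Lemma sum_lt (l : list nat) (F G : nat -> R) :
  l <> nil -> (forall x, In x l -> F x < G x) ->
  fold_right Rplus 0 (map F l) < fold_right Rplus 0 (map G l).
Proof.
  induction l as [|x l IH]; intros Hne H; [congruence|].
  simpl. destruct l as [|y l'].
  - simpl. specialize (H x (or_introl eq_refl)). lra.
  - assert (F x < G x) by (apply H; left; auto).
    assert (fold_right Rplus 0 (map F (y :: l')) < fold_right Rplus 0 (map G (y :: l'))).
    { apply IH; [congruence|]. intros z Hz; apply H; right; auto. }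
    lra.
Qed.

Lemma sumN_lt N F G : (1 <= N)%nat -> (forall i, (i < N)%nat -> F i < G i) ->
  sumN N F < sumN N G.
Proof.
  intros HN H. unfold sumN. apply sum_lt.
  - destruct N; [lia|]. simpl. congruence.
  - intros x Hx. apply in_seq in Hx. apply H. lia.
Qed.

Definition Pinf (F : R -> R) := forall M, exists d, 0 < d /\ forall l, 0 < l < d -> M < F l.

Lemma Pinf_plus F G : Pinf F -> Pinf G -> Pinf (fun l => F l + G l).
Proof.
  intros HF HG M. destruct (HF (M/2)) as [d1 [Hd1 H1]]. destruct (HG (M/2)) as [d2 [Hd2 H2]].
  exists (Rmin d1 d2). split; [apply Rmin_pos; auto|].
  intros l Hl. pose proof (Rmin_l d1 d2). pose proof (Rmin_r d1 d2).
  assert (M/2 < F l) by (apply H1; lra). assert (M/2 < G l) by (apply H2; lra). lra.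
Qed.

Lemma Pinf_sum (l : list nat) (F : nat -> R -> R) :
  l <> nil -> (forall x, In x l -> Pinf (F x)) ->
  Pinf (fun lam => fold_right Rplus 0 (map (fun i => F i lam) l)).
Proof.
  induction l as [|x l IH]; intros Hne H; [congruence|].
  simpl. destruct l as [|y l'].
  - simpl. intros M. destruct (H x (or_introl eq_refl) M) as [d [Hd Hd']].
    exists d. split; auto. intros lam Hl. specialize (Hd' lam Hl). lra.
  - apply (Pinf_plus (F x) (fun lam => fold_right Rplus 0 (map (fun i => F i lam) (y :: l')))).
    + apply H; left; auto.
    + apply IH; [congruence|]. intros z Hz; apply H; right; auto.
Qed.

Lemma term_inf (D a b : R) : 0 < D -> 0 < b ->
  Pinf (fun lam => D * Hf a b (Wt (a + b / lam - 1))).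
Proof.
  intros HD Hb M.
  set (K := Rmax (M / D) 0 + 1).
  assert (HK0 : 0 < K) by (unfold K; pose proof (Rmax_r (M/D) 0); lra).
  set (W0 := Rmax 1 (exp (a + 2 * b * K))).
  assert (HW01 : 1 <= W0) by apply Rmax_l.
  assert (HW02 : exp (a + 2 * b * K) <= W0) by apply Rmax_r.
  set (T0 := ln W0 + W0).
  set (d := b / (Rabs (T0 - a + 1) + 1)).
  assert (Hden : 0 < Rabs (T0 - a + 1) + 1) by (pose proof (Rabs_pos (T0 - a + 1)); lra).
  exists d. split; [unfold d; apply Rdiv_lt_0_compat; lra|].
  intros lam [Hl0 Hld].
  assert (Hbl : T0 - a + 1 < b / lam).
  { assert (b / d = Rabs (T0 - a + 1) + 1) by (unfold d; field; lra).
    assert (b / d < b / lam).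
    { unfold Rdiv. apply Rmult_lt_compat_l; auto. apply Rinv_lt_contravar; auto.
      apply Rmult_lt_0_compat; lra. }
    pose proof (Rle_abs (T0 - a + 1)). lra. }
  destruct (Wt_spec (a + b / lam - 1)) as [Hw Heq].
  set (w := Wt (a + b / lam - 1)) in *.
  assert (HwW : W0 <= w).
  { destruct (Rle_or_lt W0 w) as [|Hlt]; auto.
    pose proof (ln_increasing w W0 Hw Hlt). unfold T0 in Hbl. lra. }
  assert (Hlnw : a + 2 * b * K <= ln w).
  { rewrite <- (ln_exp (a + 2 * b * K)).
    destruct (Req_dec (exp (a + 2 * b * K)) w) as [E|E]; [rewrite E; lra|].
    left. apply ln_increasing; [apply exp_pos| lra]. }
  assert (Hq : 1/2 <= w / (w + 1)).
  { apply Rmult_le_reg_r with (2 * (w + 1)); [lra|].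
    replace (w / (w + 1) * (2 * (w + 1))) with (2 * w) by (field; lra). lra. }
  assert (Hc : 2 * K <= (ln w - a) / b).
  { apply Rmult_le_reg_r with b; auto.
    replace ((ln w - a) / b * b) with (ln w - a) by (field; lra). lra. }
  assert (HH : K <= Hf a b w).
  { unfold Hf. assert (0 <= 2 * K) by lra. nra. }
  assert (M / D < K) by (unfold K; pose proof (Rmax_l (M/D) 0); lra).
  assert (M < D * K).
  { apply Rmult_lt_reg_r with (/ D). apply Rinv_0_lt_compat; auto.
    replace (D * K * / D) with K by (field; lra). exact H. }
  nra.
Qed.

Lemma term_eq D a b lam : 0 < b ->
  D * q_i a b lam * c_i a b (q_i a b lam) = D * Hf a b (Wt (a + b / lam - 1)).
Proof.
  intros Hb. unfold q_i. fold (Wt (a + b / lam - 1)).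
  destruct (Wt_spec (a + b / lam - 1)) as [Hw _].
  rewrite c_eq by auto. unfold Hf. ring.
Qed.

Theorem theorem4 (N : nat) (B : R) (D b a : nat -> R)
  (HN : (1 <= N)%nat)
  (HD : forall i, (i < N)%nat -> 0 < D i)
  (Hb : forall i, (i < N)%nat -> 0 < b i) :
  (forall l1 l2, 0 < l1 -> l1 < l2 -> f_sales N D a b l2 < f_sales N D a b l1) /\
  (forall l1 l2, 0 < l1 -> l1 < l2 -> g_budget N D a b B l2 < g_budget N D a b B l1) /\
  (exists l : Rbar, filterlim (g_budget N D a b B) (at_right 0) (Rbar_locally l) /\ Rbar_lt 0 l).
Proof.
  assert (Hw : forall i l1 l2, (i < N)%nat -> 0 < l1 -> l1 < l2 ->
     let w1 := Wt (a i + b i / l1 - 1) in let w2 := Wt (a i + b i / l2 - 1) in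
     0 < w2 /\ w2 < w1 /\ 0 < ln w2 + w2 - a i + 1).
  { intros i l1 l2 Hi H1 H12 w1 w2.
    destruct (Wt_spec (a i + b i / l1 - 1)) as [Hw1 E1].
    destruct (Wt_spec (a i + b i / l2 - 1)) as [Hw2 E2].
    fold w1 in Hw1, E1. fold w2 in Hw2, E2.
    assert (b i / l2 < b i / l1).
    { unfold Rdiv. apply Rmult_lt_compat_l; auto. apply Rinv_lt_contravar; auto.
      apply Rmult_lt_0_compat; lra. }
    assert (0 < b i / l2) by (apply Rdiv_lt_0_compat; auto; lra).
    split; auto. split; [apply phi_mono; auto; lra | lra]. }
  split; [|split].
  - intros l1 l2 H1 H12. unfold f_sales. apply sumN_lt; auto.
    intros i Hi. destruct (Hw i l1 l2 Hi H1 H12) as [Hw2 [H21 _]].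
    unfold q_i. fold (Wt (a i + b i / l1 - 1)). fold (Wt (a i + b i / l2 - 1)).
    apply Rmult_lt_compat_l; auto.
    set (w1 := Wt (a i + b i / l1 - 1)) in *. set (w2 := Wt (a i + b i / l2 - 1)) in *.
    apply Rmult_lt_reg_r with ((w1 + 1) * (w2 + 1)); [nra|].
    replace (w2 / (w2 + 1) * ((w1 + 1) * (w2 + 1))) with (w2 * (w1 + 1)) by (field; lra).
    replace (w1 / (w1 + 1) * ((w1 + 1) * (w2 + 1))) with (w1 * (w2 + 1)) by (field; lra).
    lra.
  - intros l1 l2 H1 H12. unfold g_budget.
    cut (sumN N (fun i => D i * q_i (a i) (b i) l2 * c_i (a i) (b i) (q_i (a i) (b i) l2)) <
         sumN N (fun i => D i * q_i (a i) (b i) l1 * c_i (a i) (b i) (q_i (a i) (b i) l1))); [lra|].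
    apply sumN_lt; auto.
    intros i Hi. rewrite !term_eq by auto.
    destruct (Hw i l1 l2 Hi H1 H12) as [Hw2 [H21 Hp]].
    apply Rmult_lt_compat_l; auto. apply Hf_mono; auto.
  - exists p_infty. split; [|simpl; auto].
    assert (HP : Pinf (g_budget N D a b B)).
    { intros M. unfold g_budget, sumN.
      assert (Hs : Pinf (fun lam => fold_right Rplus 0
          (map (fun i => (fun i lam => D i * q_i (a i) (b i) lam *
                 c_i (a i) (b i) (q_i (a i) (b i) lam)) i lam) (seq 0 N)))).
      { apply Pinf_sum.
        - destruct N; [lia|]. simpl. congruence.
        - intros x Hx. apply in_seq in Hx. assert (Hi : (x < N)%nat) by lia.
          intros M'. destruct (term_inf (D x) (a x) (b x) (HD x Hi) (Hb x Hi) M') as [d [Hd Hd']].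
          exists d. split; auto. intros lam Hl. rewrite term_eq by auto. apply Hd'; auto. }
      destruct (Hs (M + B)) as [d [Hd Hd']]. exists d. split; auto.
      intros lam Hl. specialize (Hd' lam Hl). simpl in Hd'. lra. }
    intros P [M HM]. destruct (HP M) as [d [Hd Hd']].
    exists (mkposreal d Hd). intros y Hy Hy0. apply HM. apply Hd'.
    split; auto. unfold ball in Hy; simpl in Hy. unfold AbsRing_ball, abs, minus, plus, opp in Hy. simpl in Hy.
    rewrite Ropp_0, Rplus_0_r, Rabs_pos_eq in Hy by lra. auto.
Qed.
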